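(* Let $m\ge1$. Every constrained Young tableau of size $2\times m$ is realizable: for every such tableau $T$ there exist $\mathbf{a}=(a_1,a_2)$ and $\mathbf{b}=(b_1,\dots,b_m)$ with $0=a_1\le a_2$ and $0=b_1\le b_2\le\dots\le b_m$ such that for all cells $(i,j),(i',j')\in[2]\times[m]$ one has $T(i,j)<T(i',j')\iff a_i+b_j<a_{i'}+b_{j'}$ and $T(i,j)=T(i',j')\iff a_i+b_j=a_{i'}+b_{j'}$.
   Context: A constrained Young tableau of size $p\times m$ is a map $T:[p]\times[m]\to\{1,\dots,K\}$ onto $\{1,\dots,K\}$ (for some $K$) that is weakly increasing along each row and each column, and satisfies: (i) if $T(i,j)=T(i,j+1)$ for some $i\in[p]$, then $T(i',j)=T(i',j+1)$ for all $i'\in[p]$; (ii) if $T(i,j)=T(i+1,j)$ for some $j\in[m]$, then $T(i,j')=T(i+1,j')$ for all $j'\in[m]$. It is realizable if it is the tableau of relative orders of the values $a_i+b_j$ for some vectors $\mathbf{a},\mathbf{b}$ with weakly increasing entries, as in the claim. (These values are the values of the linear functional $(\mathbf{a},\mathbf{b})$ on the vertices $(\mathbf{e}_i,\mathbf{e}_j)$ of $\Delta_{p-1}\times\Delta_{m-1}$.) *)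

(* Defs.v *)
(* Indices of [p] x [m] are 0-based ordinals 'I_p, 'I_m. *)
From mathcomp Require Import all_boot all_order all_algebra.
From mathcomp Require Import reals.
Set Implicit Arguments. Unset Strict Implicit. Unset Printing Implicit Defensive.
Import Order.TTheory GRing.Theory Num.Theory.

Definition onto_initial (p m : nat) (T : 'I_p -> 'I_m -> nat) : Prop :=
  exists K : nat, forall k : nat,
    (1 <= k <= K)%N <-> exists (i : 'I_p) (j : 'I_m), T i j = k.

Definition constrained_young_tableau (p m : nat) (T : 'I_p -> 'I_m -> nat) : Prop :=
  [/\ onto_initial T,
      (forall (i : 'I_p) (j j' : 'I_m), (j <= j')%N -> (T i j <= T i j')%N),
      (forall (i i' : 'I_p) (j : 'I_m), (i <= i')%N -> (T i j <= T i' j)%N),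
      (* (i) equal horizontal neighbours force the whole column pair equal *)
      (forall (i : 'I_p) (j j1 : 'I_m), val j1 = (val j).+1 -> T i j = T i j1 ->
         forall i' : 'I_p, T i' j = T i' j1) &
      (* (ii) equal vertical neighbours force the whole row pair equal *)
      (forall (i i1 : 'I_p) (j : 'I_m), val i1 = (val i).+1 -> T i j = T i1 j ->
         forall j' : 'I_m, T i j' = T i1 j')].

Local Open Scope ring_scope.

Definition realized_by (R : realType) (p m : nat) (T : 'I_p -> 'I_m -> nat)
    (a : 'I_p -> R) (b : 'I_m -> R) : Prop :=
  [/\ (forall i : 'I_p, val i = 0%N -> a i = 0),
      (forall i i' : 'I_p, (i <= i')%N -> a i <= a i'),
      (forall j : 'I_m, val j = 0%N -> b j = 0),
      (forall j j' : 'I_m, (j <= j')%N -> b j <= b j') &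
      (forall (i i' : 'I_p) (j j' : 'I_m),
         ((T i j < T i' j')%N <-> a i + b j < a i' + b j') /\
         (T i j = T i' j' <-> a i + b j = a i' + b j'))].

(* Main.v *)
Require Import Defs.
From mathcomp Require Import all_boot all_order all_algebra.
From mathcomp Require Import reals.
From mathcomp Require Import lra zify.
From Stdlib Require Import Classical.
Set Implicit Arguments. Unset Strict Implicit. Unset Printing Implicit Defensive.
Import Order.TTheory GRing.Theory Num.Theory.

Local Open Scope ring_scope.

Lemma exists_between (R : realType) (P : nat -> Prop) (f : nat -> R) (a : R) N :
  (forall u, (u < N)%N -> P u -> a < f u) ->
  exists z, a < z /\ forall u, (u < N)%N -> P u -> z < f u.
Proof.
elim: N => [|N IH] H.
  by exists (a + 1); split; [lra | move=> u; rewrite ltn0].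
have [z [az Hz]] : exists z, a < z /\ forall u, (u < N)%N -> P u -> z < f u.
  by apply: IH => u uN; apply: H; lia.
case: (classic (P N)) => PN; last first.
  exists z; split => // u; rewrite ltnS leq_eqVlt => /orP [/eqP -> //|uN]; exact: Hz.
have aN := H N (ltnSn N) PN.
set w := (a + f N) / 2.
have aw : a < w by rewrite /w; lra.
have wN : w < f N by rewrite /w; lra.
case: (leP w z) => wz.
  exists w; split => // u; rewrite ltnS leq_eqVlt => /orP [/eqP -> //|uN] Pu.
  have := Hz u uN Pu; lra.
exists z; split => // u; rewrite ltnS leq_eqVlt => /orP [/eqP -> _|uN]; last exact: Hz.
lra.
Qed.

Definition inv_at (R : realType) (s : nat -> nat -> Prop) (n : nat) (phi : nat -> R) :=
  [/\ (forall x y, (y <= n)%N -> (x < y)%N -> phi x < phi y),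
      (forall u v, (v <= n)%N -> s u v -> phi v = phi u + 1) &
      (forall x u v, (x <= n)%N -> (u <= n)%N -> s u v -> (x < v)%N -> phi x < phi u + 1)].

Lemma inv_step (R : realType) (s : nat -> nat -> Prop)
  (slt : forall u v, s u v -> (u < v)%N) n (phi : nat -> R) (z : R) :
  inv_at s n phi ->
  (forall x, (x <= n)%N -> phi x < z) ->
  (forall u, s u n.+1 -> z = phi u + 1) ->
  (forall u v, (u <= n)%N -> s u v -> (n.+1 < v)%N -> z < phi u + 1) ->
  inv_at s n.+1 (fun k => if k == n.+1 then z else phi k).
Proof.
move=> [M E B] H1 H2 H3.
have M' : forall x y, (y <= n.+1)%N -> (x < y)%N ->
    (if x == n.+1 then z else phi x) < (if y == n.+1 then z else phi y).
  move=> x y; rewrite leq_eqVlt => /orP [/eqP -> | yn] xy.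
    rewrite eqxx (ltn_eqF xy) /=; apply: H1; move: xy; rewrite ltnS. done.
  rewrite (ltn_eqF yn) (@ltn_eqF x) ?(ltn_trans xy yn) //; apply: M => //; lia.
split => //.
- move=> u v; rewrite leq_eqVlt => /orP [/eqP -> | vn] suv.
    have := slt _ _ suv => un; rewrite eqxx (ltn_eqF un); exact: H2.
  have := slt _ _ suv => uv.
  rewrite (ltn_eqF vn) (@ltn_eqF u) ?(ltn_trans uv vn) //; apply: E => //; lia.
- move=> x u v xn; rewrite leq_eqVlt => /orP [/eqP -> | un] suv xv.
    have : (if x == n.+1 then z else phi x) <= (if n.+1 == n.+1 then z else phi n.+1).
      move: xn; rewrite leq_eqVlt => /orP [/eqP -> | xn]; first exact: lexx.
      by apply/ltW/M'.
    rewrite eqxx; lra.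
  rewrite (ltn_eqF un).
  move: xn; rewrite leq_eqVlt => /orP [/eqP xe | xn].
    by subst x; rewrite eqxx; apply: (H3 u v).
  rewrite (ltn_eqF xn); apply: (B x u v) => //; lia.
Qed.

Lemma phi_exists (R : realType) (s : nat -> nat -> Prop)
  (slt : forall u v, s u v -> (u < v)%N)
  (sinj : forall u u' v, s u v -> s u' v -> u = u')
  (sfun : forall u v v', s u v -> s u v' -> v = v')
  (smono : forall u u' v v', s u v -> s u' v' -> (u < u')%N -> (v < v')%N) :
  forall n, exists phi : nat -> R, inv_at s n phi.
Proof.
elim => [|n [phi [M E B]]].
  exists (fun _ => 0); split.
  - by move=> x y; rewrite leqn0 => /eqP ->; rewrite ltn0.
  - by move=> u v; rewrite leqn0 => /eqP -> /slt; rewrite ltn0.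
  - by move=> x u v; rewrite !leqn0 => /eqP -> /eqP -> _ _; lra.
case: (classic (exists u, s u n.+1)) => [[u0 su0]|nos].
  have u0n : (u0 <= n)%N by have := slt _ _ su0.
  eexists; apply: (@inv_step R s slt n phi (phi u0 + 1)) => //.
  - by move=> x xn; apply: (B x u0 n.+1).
  - by move=> u su; rewrite (sinj _ _ _ su su0).
  - move=> u v un suv nv.
    case: (ltngtP u0 u) => h.
    + have := M u0 u un h; lra.
    + have := smono _ _ _ _ suv su0 h; lia.
    + by subst u; have := sfun _ _ _ su0 suv; lia.
have [z [az Hz]] := @exists_between R (fun u => exists v, s u v /\ (n.+1 < v)%N)
    (fun u => phi u + 1) (phi n) n.+1
    (fun u un '(ex_intro v (conj suv nv)) => B n u v (leqnn n) un suv (ltnW nv)).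
eexists; apply: (@inv_step R s slt n phi z) => //.
- move=> x; rewrite leq_eqVlt => /orP [/eqP -> //|xn].
  have := M x n (leqnn n) xn; lra.
- by move=> u su; exfalso; apply: nos; exists u.
- by move=> u v un suv nv; apply: Hz => //; exists v.
Qed.

Lemma mono_iff (R : realType) (phi : nat -> R) N :
  (forall x y, (y <= N)%N -> (x < y)%N -> phi x < phi y) ->
  forall x y, (x <= N)%N -> (y <= N)%N ->
  ((x < y)%N <-> phi x < phi y) /\ (x = y <-> phi x = phi y).
Proof.
move=> M x y xN yN; case: (ltngtP x y) => h.
- have hh := M x y yN h; split; split => // h';
    first [ by subst; rewrite ltnn in h | by move: hh; rewrite h' ltxx ].
- have hh := M y x xN h; split; split => // h';
    first [ by subst; rewrite ltnn in h | by move: hh; rewrite h' ltxx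
          | by move: h'; rewrite ltNge (ltW h) | by move: h; rewrite ltNge (ltW h')
          | by move: hh; rewrite ltNge (ltW h') ].
- by subst; split; split => // h'; move: h'; rewrite ltxx.
Qed.

Lemma col_eq (m : nat) (T : 'I_2 -> 'I_m -> nat) :
  (forall (i : 'I_2) (j j' : 'I_m), (j <= j')%N -> (T i j <= T i j')%N) ->
  (forall (i : 'I_2) (j j1 : 'I_m), val j1 = (val j).+1 -> T i j = T i j1 ->
         forall i' : 'I_2, T i' j = T i' j1) ->
  forall (i i' : 'I_2) (j j' : 'I_m), T i j = T i j' -> T i' j = T i' j'.
Proof.
move=> rowm ci.
suff H : forall d (i i' : 'I_2) (j j' : 'I_m), val j' = (j + d)%N ->
    T i j = T i j' -> T i' j = T i' j'.
  move=> i i' j j' e; case: (leqP j j') => jj.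
    by apply: (H (j' - j)%N i) => //; rewrite subnKC.
  symmetry; apply: (H (j - j')%N i) => //; rewrite subnKC //; exact: ltnW.
elim => [|d IH] i i' j j' ej e.
  by have -> : j' = j by apply/val_inj; rewrite /= ej addn0.
have j1m : (j.+1 < m)%N by have := ltn_ord j'; rewrite ej; lia.
pose j1 := Ordinal j1m.
have e1 : T i j = T i j1.
  apply/eqP; rewrite eqn_leq rowm /= ?leqnSn // e rowm //= ej; lia.
rewrite (ci i j j1 erefl e1 i'); apply: (IH i) => //=.
  by rewrite ej addnS.
by rewrite -e1.
Qed.

Theorem proposition2p6 (R : realType) (m : nat) (hm : (1 <= m)%N)
    (T : 'I_2 -> 'I_m -> nat) :
  constrained_young_tableau T ->
  exists (a : 'I_2 -> R) (b : 'I_m -> R), realized_by T a b.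
Proof.
move=> [_ rowm colm ci cii].
pose j0 : 'I_m := Ordinal hm.
pose o0 : 'I_2 := ord0. pose o1 : 'I_2 := ord_max.
pose N := (\max_(i : 'I_2) \max_(j : 'I_m) T i j)%N.
have hN : forall i j, (T i j <= N)%N.
  move=> i j; have h1 := @leq_bigmax _ (fun i => (\max_(j : 'I_m) T i j)%N) i.
  have h2 := @leq_bigmax _ (fun j => T i j) j.
  exact: leq_trans h2 h1.
have ceq := col_eq rowm ci.
have c01 : forall j, (T o0 j <= T o1 j)%N by move=> j; apply: colm.
have [phi [d [M D]]] : exists (phi : nat -> R) (d : R),
    (forall x y, (y <= N)%N -> (x < y)%N -> phi x < phi y) /\
    (forall j, phi (T o1 j) = phi (T o0 j) + d).
  case: (classic (exists j, T o0 j = T o1 j)) => [[j1 e1]|ne].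
    exists (fun n => n%:R), 0; split.
      by move=> x y _ xy; rewrite ltr_nat.
    move=> j; rewrite addr0; congr (_%:R).
    by symmetry; apply: (cii o0 o1 j1 erefl e1).
  pose s u v := exists j, T o0 j = u /\ T o1 j = v.
  have slt : forall u v, s u v -> (u < v)%N.
    move=> u v [j [<- <-]]; rewrite ltn_neqAle c01 andbT.
    by apply/eqP => e; apply: ne; exists j.
  have sinj : forall u u' v, s u v -> s u' v -> u = u'.
    move=> u u' v [j [<- e]] [j' [<- e']]; apply: (ceq o1); by rewrite e e'.
  have sfun : forall u v v', s u v -> s u v' -> v = v'.
    move=> u v v' [j [e <-]] [j' [e' <-]]; apply: (ceq o0); by rewrite e e'.
  have smono : forall u u' v v', s u v -> s u' v' -> (u < u')%N -> (v < v')%N.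
    move=> u u' v v' [j [<- <-]] [j' [<- <-]] lt.
    have jj : (j <= j')%N.
      by rewrite leqNgt; apply/negP => h; move: lt; rewrite ltnNge rowm // ltnW.
    rewrite ltn_neqAle rowm // andbT; apply/eqP => e.
    by move: lt; rewrite (ceq o1 o0 j j' e) ltnn.
  have [phi [M E B]] := phi_exists R slt sinj sfun smono N.
  exists phi, 1; split => // j; apply: E => //; by exists j.
have MI := mono_iff M.
have io : forall i : 'I_2, i = o0 \/ i = o1.
  by case => [[|[|k]] hi]; [left|right|]; try apply/val_inj.
exists (fun i => phi (T i j0) - phi (T o0 j0)), (fun j => phi (T o0 j) - phi (T o0 j0)).
have key : forall i j, phi (T i j0) - phi (T o0 j0) + (phi (T o0 j) - phi (T o0 j0))
    = phi (T i j) - phi (T o0 j0).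
  move=> i j; case: (io i) => ->; first lra.
  rewrite !D; lra.
have wk : forall x y, (x <= y)%N -> (y <= N)%N -> phi x <= phi y.
  move=> x y; rewrite leq_eqVlt => /orP [/eqP -> _ | xy yN]; first exact: lexx.
  exact/ltW/M.
split.
- move=> i i0; have -> : i = o0 by apply/val_inj. by rewrite subrr.
- move=> i i'; case: (io i) => ->; case: (io i') => -> // _;
    rewrite ?subrr ?lexx // subr_ge0; apply: wk => //; apply: colm.
- move=> j jz; have -> : j = j0 by apply/val_inj. by rewrite subrr.
- move=> j j' jj /=; rewrite lerD2r; apply: wk => //; exact: rowm.
- move=> i i' j j' /=; rewrite !key ltrD2r.
  have := MI (T i j) (T i' j') (hN _ _) (hN _ _) => [[h1 h2]]; split => //.
  rewrite h2; split => [->|/addIr] //.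
Qed.
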